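(* Let $R$ be a commutative ring and $n\ge 1$. Then ${\rm E}_{\psi_n}(R)={\rm E}_{2n-1}(R)$.
   Context: All rings are commutative with identity. ${\rm E}_m(R)$ is the subgroup of ${\rm SL}_m(R)$ generated by the elementary matrices $E_{ij}(\lambda)=I_m+\lambda e_{ij}$, $i\ne j$, $\lambda\in R$, where $e_{ij}$ is the matrix unit. $\psi_n=\sum_{i=1}^n e_{2i-1,2i}-\sum_{i=1}^n e_{2i,2i-1}$ is the standard $2n\times 2n$ symplectic (alternating) matrix. Elements of $R^m$ are row vectors, ${}^t$ is transpose. For an invertible alternating $2n\times2n$ matrix $\varphi$ (alternating means of the form $\nu-\nu^t$), write $\varphi=\begin{pmatrix}0&-c\\ c^t&\nu\end{pmatrix}$, $\varphi^{-1}=\begin{pmatrix}0&d\\ -d^t&\mu\end{pmatrix}$ with $c,d\in R^{2n-1}$, and set $\alpha_\varphi(v)=I_{2n-1}+d^tv\nu$, $\beta_\varphi(v)=I_{2n-1}+\mu v^tc$ for $v\in R^{2n-1}$. ${\rm E}_\varphi(R)$ is the subgroup of ${\rm GL}_{2n-1}(R)$ generated by all $\alpha_\varphi(v),\beta_\varphi(v)$, $v\in R^{2n-1}$. *)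

(* Defs.v *)
From HB Require Import structures.
From mathcomp Require Import all_boot all_order all_algebra.
Set Implicit Arguments. Unset Strict Implicit. Unset Printing Implicit Defensive.
Import GRing.Theory.
Local Open Scope ring_scope.

Inductive gen_subgroup (R : comPzRingType) (k : nat) (S : 'M[R]_k -> Prop)
  : 'M[R]_k -> Prop :=
| gen_one : gen_subgroup S 1%:M
| gen_mul g A : S g -> gen_subgroup S A -> gen_subgroup S (g *m A)
| gen_inv g h A : S g -> g *m h = 1%:M -> h *m g = 1%:M ->
    gen_subgroup S A -> gen_subgroup S (h *m A).

Definition elem_mx (R : comPzRingType) (k : nat) (i j : 'I_k) (l : R)
  : 'M[R]_k := 1%:M + l *: delta_mx i j.

Definition elem_gens (R : comPzRingType) (k : nat) (M : 'M[R]_k) : Prop :=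
  exists (i j : 'I_k) (l : R), i != j /\ M = elem_mx i j l.

Definition E_mx (R : comPzRingType) (k : nat) : 'M[R]_k -> Prop :=
  gen_subgroup (@elem_gens R k).

(* The standard symplectic matrix psi_n, of size 2n, written with size
   1 + m where m = 2n - 1 (valid when n >= 1).  Indices are 0-based:
   the paper's e_{2i-1,2i} is entry (even r, r+1). *)
Definition psi_mx (R : comPzRingType) (n : nat) : 'M[R]_(1 + (n.*2).-1) :=
  \matrix_(r, s)
    (if ~~ odd r && (s == r.+1 :> nat) then 1
     else if odd r && (s.+1 == r :> nat) then -1 else 0).

Section Ephi.
Variables (R : comPzRingType) (m : nat).
Variables (phi phiinv : 'M[R]_(1 + m)).
(* phi = [[0, -c], [c^t, nu]],  phi^{-1} = [[0, d], [-d^t, mu]] *)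
Definition phi_c : 'rV[R]_m := - ursubmx phi.
Definition phi_nu : 'M[R]_m := drsubmx phi.
Definition phi_d : 'rV[R]_m := ursubmx phiinv.
Definition phi_mu : 'M[R]_m := drsubmx phiinv.
Definition alpha_phi (v : 'rV[R]_m) : 'M[R]_m :=
  1%:M + (phi_d)^T *m v *m phi_nu.
Definition beta_phi (v : 'rV[R]_m) : 'M[R]_m :=
  1%:M + phi_mu *m v^T *m phi_c.
Definition Ephi_gens (M : 'M[R]_m) : Prop :=
  exists v, M = alpha_phi v \/ M = beta_phi v.
Definition E_phi : 'M[R]_m -> Prop := gen_subgroup Ephi_gens.
End Ephi.

(* Main.v *)
Require Import Defs.
From HB Require Import structures.
From mathcomp Require Import all_boot all_order all_algebra.
Import GRing.Theory.
Local Open Scope ring_scope.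

Lemma gen_mulC (R : comPzRingType) k (S : 'M[R]_k -> Prop) A B :
  gen_subgroup S A -> gen_subgroup S B -> gen_subgroup S (A *m B).
Proof.
elim => [|g A' Sg _ IH|g h A' Sg gh hg _ IH] GB.
- by rewrite mul1mx.
- by rewrite -mulmxA; apply: gen_mul => //; exact: IH.
- by rewrite -mulmxA; apply: (gen_inv Sg gh hg); exact: IH.
Qed.

Lemma gen_base (R : comPzRingType) k (S : 'M[R]_k -> Prop) g :
  S g -> gen_subgroup S g.
Proof. by move=> Sg; rewrite -[g]mulmx1; apply: gen_mul => //; exact: gen_one. Qed.

Lemma gen_incl (R : comPzRingType) k (S S' : 'M[R]_k -> Prop) :
  (forall g, S g -> gen_subgroup S' g /\ exists g', gen_subgroup S' g' /\ g *m g' = 1%:M) ->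
  forall A, gen_subgroup S A -> gen_subgroup S' A.
Proof.
move=> H A; elim=> [|g A' Sg _ IH|g h A' Sg gh hg _ IH].
- exact: gen_one.
- by apply: gen_mulC IH; exact: (H g Sg).1.
- have [_ [g' [G' gg']]] := H g Sg.
  have ->: h = g' by rewrite -[h]mulmx1 -gg' mulmxA hg mul1mx.
  exact: gen_mulC.
Qed.

Lemma rowform (R : comPzRingType) k (w : 'rV[R]_k.+1) : w 0 0 = 0 ->
  E_mx (1%:M + (delta_mx ord0 ord0 : 'cV[R]_k.+1) *m w).
Proof.
move=> w0.
have ->: (delta_mx ord0 ord0 : 'cV[R]_k.+1) *m w = \sum_(j < k.+1) w 0 j *: delta_mx ord0 j.
  rewrite {1}(row_sum_delta w) mulmx_sumr; apply: eq_bigr => j _.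
  by rewrite -scalemxAr mul_delta_mx.
pose K (X : 'M[R]_k.+1) := E_mx (1%:M + X) /\
  (forall i, i != ord0 -> delta_mx (ord0 : 'I_k.+1) i *m X = 0).
suff : K (\sum_(j < k.+1) w 0 j *: delta_mx ord0 j) by case.
apply: (big_rec K) => [|j X _ [EX HX]].
  by split; [rewrite addr0; exact: gen_one | move=> i _; exact: mulmx0].
case: (eqVneq j ord0) => [->|jn0].
  by rewrite w0 scale0r add0r; split.
split.
  have ->: 1%:M + (w 0 j *: delta_mx ord0 j + X) = elem_mx ord0 j (w 0 j) *m (1%:M + X).
    rewrite /elem_mx mulmxDl mul1mx -scalemxAl mulmxDr mulmx1 HX // addr0.
    idtac.
    by rewrite (addrC _ X) addrA.
  by apply: gen_mul => //; exists ord0, j, (w 0 j); split => //; rewrite eq_sym.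
move=> i i0; rewrite mulmxDr -scalemxAr mul_delta_mx_cond (negbTE i0) mulr0n scaler0 add0r.
exact: HX.
Qed.

Lemma colform (R : comPzRingType) k (w : 'rV[R]_k.+1) : w 0 0 = 0 ->
  E_mx (1%:M + w^T *m (delta_mx ord0 ord0 : 'rV[R]_k.+1)).
Proof.
move=> w0.
have ->: w^T *m (delta_mx ord0 ord0 : 'rV[R]_k.+1) = \sum_(j < k.+1) w 0 j *: delta_mx j ord0.
  have ts (F : 'I_k.+1 -> 'rV[R]_k.+1) : (\sum_j F j)^T = \sum_j (F j)^T.
    by apply/matrixP => a b; rewrite mxE !summxE; apply: eq_bigr => j _; rewrite mxE.
  rewrite {1}(row_sum_delta w) ts mulmx_suml; apply: eq_bigr => j _.
  have tz (a : R) (B : 'rV[R]_k.+1) : (a *: B)^T = a *: B^T by apply/matrixP => ? ?; rewrite !mxE.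
  by rewrite tz -scalemxAl trmx_delta mul_delta_mx.
pose K (X : 'M[R]_k.+1) := E_mx (1%:M + X) /\
  (forall i : 'I_k.+1, delta_mx i (ord0 : 'I_k.+1) *m X = 0).
suff : K (\sum_(j < k.+1) w 0 j *: delta_mx j ord0) by case.
apply: (big_rec K) => [|j X _ [EX HX]].
  by split; [rewrite addr0; exact: gen_one | move=> i; exact: mulmx0].
case: (eqVneq j ord0) => [->|jn0].
  by rewrite w0 scale0r add0r; split.
split.
  have ->: 1%:M + (w 0 j *: delta_mx j ord0 + X) = elem_mx j ord0 (w 0 j) *m (1%:M + X).
    rewrite /elem_mx mulmxDl mul1mx -scalemxAl mulmxDr mulmx1 HX // addr0.
    by rewrite (addrC _ X) addrA.
  by apply: gen_mul => //; exists j, ord0, (w 0 j); split.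
move=> i; rewrite mulmxDr -scalemxAr mul_delta_mx_cond eq_sym (negbTE jn0) mulr0n scaler0 add0r.
exact: HX.
Qed.

Lemma rowinv (R : comPzRingType) k (w : 'rV[R]_k.+1) : w 0 0 = 0 ->
  (1%:M + (delta_mx ord0 ord0 : 'cV[R]_k.+1) *m w) *m
  (1%:M + (delta_mx ord0 ord0 : 'cV[R]_k.+1) *m (- w)) = 1%:M.
Proof.
move=> w0.
have h0 : w *m (delta_mx ord0 ord0 : 'cV[R]_k.+1) = 0.
  by apply/matrixP => a b; rewrite -colE !mxE !ord1 w0.
rewrite mulmxDl mul1mx mulmxDr mulmx1 -mulmxA (mulmxA w) h0 mul0mx mulmx0 addr0.
by rewrite mulmxN addrNK.
Qed.

Lemma colinv (R : comPzRingType) k (w : 'rV[R]_k.+1) : w 0 0 = 0 ->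
  (1%:M + w^T *m (delta_mx ord0 ord0 : 'rV[R]_k.+1)) *m
  (1%:M + (- w)^T *m (delta_mx ord0 ord0 : 'rV[R]_k.+1)) = 1%:M.
Proof.
move=> w0.
have h0 : (delta_mx ord0 ord0 : 'rV[R]_k.+1) *m w^T = 0.
  by apply/matrixP => a b; rewrite -rowE !mxE !ord1 w0.
rewrite mulmxDl mul1mx mulmxDr mulmx1 -mulmxA (mulmxA _ (- w)^T) linearN /= mulmxN h0 oppr0.
by rewrite mul0mx mulmx0 addr0 mulNmx addrNK.
Qed.

Lemma comm_id (R : comPzRingType) k (i j : 'I_k.+1) (l : R) :
  i != ord0 -> j != ord0 -> i != j ->
  elem_mx i ord0 l *m elem_mx ord0 j 1 *m elem_mx i ord0 (- l) *m elem_mx ord0 j (-1)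
  = elem_mx i j l.
Proof.
move=> i0 j0 ij.
have e1 : elem_mx i ord0 l *m elem_mx ord0 j 1 = elem_mx i ord0 l + delta_mx ord0 j + l *: delta_mx i j.
  rewrite /elem_mx mulmxDl !mulmxDr !mul1mx !mulmx1 -scalemxAl -scalemxAr mul_delta_mx !scale1r.
  by rewrite addrA [1%:M + _ + l *: delta_mx i ord0]addrAC.
have e2 : (elem_mx i ord0 l + delta_mx ord0 j + l *: delta_mx i j) *m elem_mx i ord0 (- l)
   = 1%:M + delta_mx ord0 j + l *: delta_mx i j.
  rewrite /elem_mx !mulmxDl !mulmxDr !mul1mx !mulmx1 -!scalemxAl -!scalemxAr !mul_delta_mx_cond.
  rewrite !(eq_sym _ i) (negbTE i0) (negbTE ij) /= !mulr0n !scaler0 !addr0.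
  by rewrite scaleNr addrNK.
rewrite e1 e2 /elem_mx !mulmxDl !mulmxDr !mul1mx !mulmx1 -!scalemxAl -!scalemxAr !mul_delta_mx_cond.
rewrite (negbTE j0) /= !mulr0n !scaler0 !addr0.
by rewrite scaleN1r addrNK.
Qed.

Lemma sum_single (R : comPzRingType) N (F : 'I_N.+1 -> R) a : (a < N.+1)%N ->
  (forall t : 'I_N.+1, val t != a -> F t = 0) -> \sum_t F t = F (inord a).
Proof.
move=> ha H; rewrite (bigD1 (inord a)) //= big1 ?addr0 // => t tne.
apply: H; apply/eqP => ta; move/eqP: tne; apply; apply/val_inj; by rewrite /= inordK // -ta.
Qed.

Definition fpsi (R : comPzRingType) (r s : nat) : R :=
  if ~~ odd r && (s == r.+1) then 1 else if odd r && (s.+1 == r) then -1 else 0.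

Lemma psiE (R : comPzRingType) k (r s : 'I_(1 + (k.+1).*2.-1)) :
  psi_mx R k.+1 r s = fpsi R r s.
Proof. by rewrite mxE. Qed.

Lemma psi_sq (R : comPzRingType) k : psi_mx R k.+1 *m psi_mx R k.+1 = - 1%:M.
Proof.
apply/matrixP => r s; rewrite !mxE.
have hr : (r < k.*2.+2)%N := ltn_ord r.
have hs : (s < k.*2.+2)%N := ltn_ord s.
case: (boolP (odd r)) => hor.
  have r0 : (0 < r)%N by case: (nat_of_ord r) hor.
  rewrite (@sum_single _ _ _ r.-1); last first.
  - move=> t tne; rewrite psiE /fpsi hor /=.
    case: eqP => [e|]; last by rewrite mul0r.
    by move: tne; rewrite -e /= eqxx.
  - by apply: leq_ltn_trans hr; exact: leq_pred.
  rewrite !psiE /fpsi inordK; last by apply: leq_ltn_trans hr; exact: leq_pred.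
  rewrite hor /= prednK // eqxx.
  have -> : odd r.-1 = false by move: hor; rewrite -(prednK r0) /= => /negbTE.
  have -> : (nat_of_ord s == r) = (r == s) by rewrite eq_sym.
  case: (r == s) => /=.
    by rewrite mulr1.
  by rewrite mulr0 mulr0n oppr0.
have hr1 : (r.+1 < k.*2.+2)%N.
  rewrite ltn_neqAle hr andbT; apply/eqP => e.
  by move: hor; rewrite -[nat_of_ord r]/(r.+1.-1) e /= odd_double.
rewrite (@sum_single _ _ _ r.+1); last first.
- move=> t tne; rewrite psiE /fpsi (negbTE hor) /=.
  case: eqP => [e|]; last by rewrite mul0r.
  by exfalso; move/eqP: tne; apply; exact: e.
- exact: hr1.
rewrite !psiE /fpsi inordK // /= hor /= eqxx /= eqSS.
have -> : (nat_of_ord s == r) = (r == s) by rewrite eq_sym.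
case: (r == s) => /=.
  by rewrite mul1r.
by rewrite mulr0 mulr0n oppr0.
Qed.

Lemma fpsi_anti (R : comPzRingType) r s : fpsi R s r = - fpsi R r s.
Proof.
rewrite /fpsi.
case: (eqVneq s r.+1) => [->|ne1].
  rewrite (ltn_eqF (leqnSn r.+1)) (gtn_eqF (leqnSn r.+1)) /=.
  by case: (odd r) => /=; rewrite ?opprK ?oppr0.
case: (eqVneq r s.+1) => [->|ne2].
  by rewrite /=; case: (odd s) => /=; rewrite ?opprK ?oppr0.
by rewrite !andbF oppr0.
Qed.

Definition nu_mx (R : comPzRingType) k : 'M[R]_(k.*2.+1) := drsubmx (psi_mx R k.+1).

Lemma nuE (R : comPzRingType) k (i j : 'I_(k.*2.+1)) : nu_mx R k i j = fpsi R i.+1 j.+1.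
Proof. by rewrite /nu_mx !mxE. Qed.

Lemma nu_tr (R : comPzRingType) k : (nu_mx R k)^T = - nu_mx R k.
Proof. by apply/matrixP => i j; rewrite [LHS]mxE [RHS]mxE !nuE fpsi_anti. Qed.

Lemma nu_col0 (R : comPzRingType) k (v : 'rV[R]_(k.*2.+1)) : (v *m nu_mx R k) 0 0 = 0.
Proof.
rewrite mxE big1 // => t _; rewrite nuE /fpsi /=.
by case: (nat_of_ord t) => [|[|t']] /=; rewrite ?andbF mulr0.
Qed.

Lemma nu_surj (R : comPzRingType) k (j : 'I_(k.*2.+1)) : j != ord0 ->
  exists v : 'rV[R]_(k.*2.+1), v *m nu_mx R k = delta_mx 0 j.
Proof.
move=> j0.
have hj : (j < k.*2.+1)%N := ltn_ord j.
case: (boolP (odd j)) => hoj.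
  have hj1 : (j.+1 < k.*2.+1)%N.
    rewrite ltn_neqAle hj andbT; apply/eqP => e.
    by move: hoj; rewrite -[nat_of_ord j]/(j.+1.-1) e /= odd_double.
  exists (- delta_mx 0 (inord j.+1)); apply/matrixP => a s.
  rewrite mulNmx -rowE [LHS]mxE [row _ _ _ _]mxE [RHS]mxE nuE inordK // /fpsi /= hoj /= !eqSS (ord1 a) eqxx /=.
  have -> : (nat_of_ord s == j) = (s == j) by [].
  by case: (s == j) => /=; rewrite ?opprK ?oppr0.
have j1 : (0 < j)%N by rewrite lt0n.
exists (delta_mx 0 (inord j.-1)); apply/matrixP => a s.
rewrite -rowE [LHS]mxE [RHS]mxE nuE inordK; last by apply: leq_ltn_trans hj; exact: leq_pred.
rewrite prednK // /fpsi /= hoj /= !eqSS (ord1 a) eqxx /=.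
rewrite (negbTE hoj) andFb.
have -> : (nat_of_ord s == j) = (s == j) by [].
by case: (s == j).
Qed.

Lemma elem_in (R : comPzRingType) k (S : 'M[R]_k.+1 -> Prop) :
  (forall j l, j != ord0 -> gen_subgroup S (elem_mx ord0 j l) /\ gen_subgroup S (elem_mx j ord0 l)) ->
  forall i j l, i != j -> gen_subgroup S (elem_mx i j l).
Proof.
move=> H i j l ij.
case: (eqVneq i ord0) => [ei | i0].
  by rewrite ei in ij *; apply: (H j l _).1; rewrite eq_sym.
case: (eqVneq j ord0) => [ej | j0].
  by rewrite ej; exact: (H i l i0).2.
rewrite -comm_id //.
apply: gen_mulC; last exact: (H j (-1) j0).1.
apply: gen_mulC; last exact: (H i (-l) i0).2.
apply: gen_mulC; last exact: (H j 1 j0).1.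
exact: (H i l i0).2.
Qed.

Lemma elem_inv (R : comPzRingType) k (i j : 'I_k) (l : R) : i != j ->
  elem_mx i j l *m elem_mx i j (- l) = 1%:M.
Proof.
move=> ij; rewrite /elem_mx mulmxDl !mulmxDr !mul1mx !mulmx1 -scalemxAl -scalemxAr.
rewrite mul_delta_mx_cond eq_sym (negbTE ij) mulr0n !scaler0 addr0 scaleNr.
by rewrite addrNK.
Qed.

Theorem lemma3p9 (R : comPzRingType) (n : nat) (hn : (0 < n)%N)
  (psiinv : 'M[R]_(1 + (n.*2).-1))
  (hinv : psi_mx R n *m psiinv = 1%:M) (hinv' : psiinv *m psi_mx R n = 1%:M) :
  forall M : 'M[R]_((n.*2).-1),
    E_phi (psi_mx R n) psiinv M <-> E_mx M.
Proof.
case: n hn psiinv hinv hinv' => // k _ psiinv hinv hinv'.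
have hpi : psiinv = - psi_mx R k.+1.
  by rewrite -[psiinv]mulmx1 -[1%:M](opprK) -psi_sq -mulmxN mulmxA hinv' mul1mx.
have hc : ursubmx (psi_mx R k.+1) = (delta_mx ord0 ord0 : 'rV[R]_(k.*2.+1)).
  apply/matrixP => a j; rewrite !mxE (ord1 a) /=.
  have -> : (j == ord0) = (nat_of_ord j == 0%N) by [].
  by case: (nat_of_ord j).
have halpha : forall v, alpha_phi (psi_mx R k.+1) psiinv v =
    1%:M + (delta_mx ord0 ord0 : 'cV[R]_(k.*2.+1)) *m (- (v *m nu_mx R k)).
  move=> v; rewrite /alpha_phi /phi_d /phi_nu hpi.
  have -> : ursubmx (- psi_mx R k.+1) = - ursubmx (psi_mx R k.+1)
    by apply/matrixP => a b; rewrite !mxE.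
  rewrite hc.
  have tN (A : 'rV[R]_(k.*2.+1)) : (- A)^T = - A^T by apply/matrixP => a b; rewrite !mxE.
  by rewrite tN trmx_delta mulNmx mulmxN mulNmx -mulmxA.
have hbeta : forall v, beta_phi (psi_mx R k.+1) psiinv v =
    1%:M + (- (v *m nu_mx R k))^T *m (delta_mx ord0 ord0 : 'rV[R]_(k.*2.+1)).
  move=> v; rewrite /beta_phi /phi_mu /phi_c hpi hc.
  have -> : drsubmx (- psi_mx R k.+1) = - nu_mx R k
    by apply/matrixP => a b; rewrite !mxE.
  have -> : (- (v *m nu_mx R k))^T = - ((nu_mx R k)^T *m v^T)
    by rewrite -trmx_mul; apply/matrixP => a b; rewrite !mxE.
  by rewrite nu_tr mulNmx opprK mulNmx mulmxN opprK.
have w0 : forall v : 'rV[R]_(k.*2.+1), (- (v *m nu_mx R k)) 0 0 = 0.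
  by move=> v; rewrite mxE nu_col0 oppr0.
move=> M; split.
  apply: gen_incl => g [v [->|->]].
    rewrite halpha; split; first exact: rowform.
    exists (1%:M + (delta_mx ord0 ord0 : 'cV[R]_(k.*2.+1)) *m (- - (v *m nu_mx R k))).
    split; last exact: rowinv.
    by apply: rowform; rewrite mxE w0 oppr0.
  rewrite hbeta; split; first exact: colform.
  exists (1%:M + (- - (v *m nu_mx R k))^T *m (delta_mx ord0 ord0 : 'rV[R]_(k.*2.+1))).
  split; last exact: colinv.
  by apply: colform; rewrite mxE w0 oppr0.
have H : forall j l, j != ord0 ->
    gen_subgroup (Ephi_gens (psi_mx R k.+1) psiinv) (elem_mx ord0 j l) /\
    gen_subgroup (Ephi_gens (psi_mx R k.+1) psiinv) (elem_mx j (ord0 : 'I_(k.*2.+1)) l).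
  move=> j l j0; have [v hv] := @nu_surj R k j j0.
  split; apply: gen_base; exists ((- l) *: v).
    left; rewrite halpha -scalemxAl hv scaleNr opprK -scalemxAr mul_delta_mx.
    by [].
  right; rewrite hbeta -scalemxAl hv scaleNr opprK.
  have tz (B : 'rV[R]_(k.*2.+1)) : (l *: B)^T = l *: B^T by apply/matrixP => a b; rewrite !mxE.
  by rewrite tz trmx_delta -scalemxAl mul_delta_mx.
apply: gen_incl => g [i [j [l [ij ->]]]]; split.
  exact: elem_in.
exists (elem_mx i j (- l)); split; last exact: elem_inv.
exact: elem_in.
Qed.
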